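(* Let $\mathcal{M}=(E,\rho)$ be a $q$-matroid with $\dim E\ge 2$. The following are equivalent: (i) $\mathcal{M}$ is irreducible; (ii) $\mathcal{M}$ is full and there do not exist nonzero subspaces $Z_1,Z_2\in\mathcal{Z}(\mathcal{M})$ such that $E=Z_1\oplus Z_2$ (i.e. $Z_1+Z_2=E$ and $Z_1\cap Z_2=0$), $\rho(Z_1)+\rho(Z_2)=\rho(E)$, and $\{Y_1\oplus Y_2\mid Y_1\in\mathcal{Z}_1,\ Y_2\in\mathcal{Z}_2\}=\mathcal{Z}(\mathcal{M})$, where $\mathcal{Z}_i=\{Z\in\mathcal{Z}(\mathcal{M})\mid Z\le Z_i\}$.
   Context: Let $\mathbb{F}=\mathbb{F}_q$. For a finite-dimensional $\mathbb{F}$-vector space $E$, $\mathcal{L}(E)$ is its subspace lattice. A $q$-matroid is $\mathcal{M}=(E,\rho)$ with $\rho:\mathcal{L}(E)\to\mathbb{Z}_{\ge0}$ satisfying $0\le\rho(V)\le\dim V$, monotonicity, and submodularity $\rho(V+W)+\rho(V\cap W)\le\rho(V)+\rho(W)$. A flat is $F$ with $\rho(F+\langle x\rangle)>\rho(F)$ for all $x\notin F$. The closure is $\mathrm{cl}(V)=\sum\{\langle x\rangle : x\in E,\ \rho(V+\langle x\rangle)=\rho(V)\}$. The cyclic core is $\mathrm{cyc}(V)=\{x\in V\mid\rho(W)=\rho(V)\text{ for all }W\le V\text{ with }W+\langle x\rangle=V\}$; $V$ is cyclic if $\mathrm{cyc}(V)=V$; $\mathcal{Z}(\mathcal{M})$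 is the set of cyclic flats. $\mathcal{M}$ is full if $\mathrm{cl}(0)=0$ and $\mathrm{cyc}(E)=E$. Direct sum: for $q$-matroids $\mathcal{M}_i=(E_i,\rho_i)$ and $E=E_1\oplus E_2$ with projections $\pi_i$, $\mathcal{M}_1\oplus\mathcal{M}_2=(E,\rho)$ with $\rho(V)=\dim V+\min_{X\le V}(\rho_1(\pi_1(X))+\rho_2(\pi_2(X))-\dim X)$; we write $\mathcal{M}=\mathcal{M}_1\oplus\mathcal{M}_2$ when $E$ is the internal direct sum of subspaces $E_1,E_2$ and the rank function of $\mathcal{M}$ equals this one. $\mathcal{M}$ is reducible if $\mathcal{M}=\mathcal{M}_1\oplus\mathcal{M}_2$ for some $q$-matroids $\mathcal{M}_1,\mathcal{M}_2$ with nonzero ground spaces, and irreducible otherwise. *)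

(* Defs.v *)
From HB Require Import structures.
From mathcomp Require Import all_boot all_order all_algebra all_fingroup all_field.
Set Implicit Arguments. Unset Strict Implicit. Unset Printing Implicit Defensive.
Import Order.TTheory GRing.Theory Num.Theory.
Local Open Scope ring_scope.

Section QMatroid.
Variables (F : finFieldType) (vT : vectType F).

(* A q-matroid with ground space E (a subspace of vT) and rank function rho;
   only the values of rho on subspaces of E matter. *)
Definition is_qmatroid (E : {vspace vT}) (rho : {vspace vT} -> nat) : Prop :=
  (forall V, (V <= E)%VS -> (rho V <= \dim V)%N) /\
  (forall V W, (V <= E)%VS -> (W <= E)%VS -> (V <= W)%VS -> (rho V <= rho W)%N) /\
  (forall V W, (V <= E)%VS -> (W <= E)%VS ->
     (rho (V + W)%VS + rho (V :&: W)%VS <= rho V + rho W)%N).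

Variables (E : {vspace vT}) (rho : {vspace vT} -> nat).

Definition qflat (Fl : {vspace vT}) : Prop :=
  (Fl <= E)%VS /\
  forall x, x \in E -> x \notin Fl -> (rho Fl < rho (Fl + <[x]>)%VS)%N.

Definition qcl (V : {vspace vT}) : {vspace vT} :=
  (\sum_(x : finvect_type vT | (x \in E) && (rho (V + @vline F vT x)%VS == rho V)) @vline F vT x)%VS.

Definition in_cyc (V : {vspace vT}) (x : vT) : Prop :=
  x \in V /\
  forall W, (W <= V)%VS -> (W + <[x]>)%VS = V -> rho W = rho V.

Definition qcyclic (V : {vspace vT}) : Prop := forall x, x \in V -> in_cyc V x.

Definition cyclic_flat (Z : {vspace vT}) : Prop := qflat Z /\ qcyclic Z.

Definition qfull : Prop := qcl 0%VS = 0%VS /\ qcyclic E.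

End QMatroid.

(* M = M1 (+) M2 : E is the internal direct sum of E1, E2 and for all V <= E,
   rho V = dim V + min_{X <= V} (rho1 (pi1 X) + rho2 (pi2 X) - dim X)  (in Z). *)
Definition is_direct_sum (F : finFieldType) (vT : vectType F)
    (E : {vspace vT}) (rho : {vspace vT} -> nat)
    (E1 : {vspace vT}) (rho1 : {vspace vT} -> nat)
    (E2 : {vspace vT}) (rho2 : {vspace vT} -> nat) : Prop :=
  (E1 + E2)%VS = E /\ (E1 :&: E2)%VS = 0%VS /\
  let pi1 := daddv_pi E1 E2 in
  let pi2 := daddv_pi E2 E1 in
  let val X := ((rho1 (pi1 @: X)%VS)%:Z + (rho2 (pi2 @: X)%VS)%:Z
                - (\dim X)%:Z)%R in
  forall V, (V <= E)%VS ->
    (exists2 X, (X <= V)%VS & (rho V)%:Z = ((\dim V)%:Z + val X)%R) /\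
    (forall X, (X <= V)%VS -> ((rho V)%:Z <= (\dim V)%:Z + val X)%R).

Definition qreducible (F : finFieldType) (vT : vectType F)
    (E : {vspace vT}) (rho : {vspace vT} -> nat) : Prop :=
  exists E1 E2 : {vspace vT}, exists rho1 rho2 : {vspace vT} -> nat,
    E1 != 0%VS /\ E2 != 0%VS /\
    is_qmatroid E1 rho1 /\ is_qmatroid E2 rho2 /\
    is_direct_sum E rho E1 rho1 E2 rho2.

Definition qirreducible (F : finFieldType) (vT : vectType F)
    (E : {vspace vT}) (rho : {vspace vT} -> nat) : Prop :=
  ~ qreducible E rho.

(* Main.v *)
Require Import Defs.
From HB Require Import structures.
From mathcomp Require Import all_boot all_order all_algebra all_fingroup all_field.
From mathcomp Require Import zify.
Import Order.TTheory GRing.Theory Num.Theory.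

Set Implicit Arguments. Unset Strict Implicit. Unset Printing Implicit Defensive.

Section Gen.
Variables (F : finFieldType) (vT : vectType F).
Implicit Types (U V W X Y Z A B P Q : {vspace vT}) (x y : vT).

Lemma line_disj P x : x \notin P -> (P :&: <[x]> = 0)%VS.
Proof.
move=> xP; apply/eqP; rewrite -subv0; apply/subvP => v /memv_capP[vP /vlineP[k vk]].
rewrite memv0; apply/eqP; move: vP; rewrite vk.
have [->|k0] := eqVneq k 0%R; first by rewrite scale0r.
by move=> /(memvZ k^-1); rewrite scalerA mulVf // scale1r (negbTE xP).
Qed.

Lemma dim_add_line P x : x \notin P -> \dim (P + <[x]>) = (\dim P).+1.
Proof.
move=> xP; have := dimv_sum_cap P <[x]>; rewrite line_disj // dimv0 addn0 dim_vline.
have -> : x != 0%R by apply: contraNneq xP => ->; rewrite mem0v.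
by rewrite addn1.
Qed.

Lemma dim_add_line_le P x : \dim (P + <[x]>) <= (\dim P).+1.
Proof.
have := dimv_sum_cap P <[x]>; have := dim_vline x. case: (x != 0%R) => /= H; lia.
Qed.

Lemma dim_add_le A B : \dim (A + B) <= \dim A + \dim B.
Proof. have := dimv_sum_cap A B; lia. Qed.

Lemma dim_add_disj A B : (A :&: B = 0)%VS -> \dim (A + B) = \dim A + \dim B.
Proof. move=> h; have := dimv_sum_cap A B; rewrite h dimv0; lia. Qed.

Lemma modular A B C : (A <= C)%VS -> ((A + B) :&: C = A + (B :&: C))%VS.
Proof.
move=> AC; apply/eqP; rewrite eqEsubv; apply/andP; split; apply/subvP => v.
  move=> /memv_capP[/memv_addP[a aA [b bB ->]] vC].
  apply: memv_add => //; apply/memv_capP; split => //.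
  have -> : b = ((a + b) - a)%R by rewrite addrC addKr.
  by apply: memvB => //; apply: (subvP AC).
move=> /memv_addP[a aA [b /memv_capP[bB bC] ->]].
apply/memv_capP; split; first exact: memv_add.
by apply: memvD => //; apply: (subvP AC).
Qed.

Lemma proper_hyp P Y : (P <= Y)%VS -> P != Y ->
  exists x, exists W, [/\ x \in Y, (P <= W)%VS, (W <= Y)%VS, (W + <[x]> = Y)%VS &
     (\dim W).+1 <= \dim Y].
Proof.
move=> PY PnY.
have : ~~ (Y <= P)%VS by apply: contra PnY => YP; rewrite eqEsubv PY YP.
case/subvPn => x xY xP.
set S := (P + <[x]>)%VS.
have SY : (S <= Y)%VS by rewrite subv_add PY -memvE.
exists x, (P + (Y :\: S))%VS; split => //; first exact: addvSl.
  by rewrite subv_add PY diffvSl.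
  rewrite -addvA [((Y :\: S) + _)%VS]addvC addvA.
  have -> : (P + <[x]> + (Y :\: S))%VS = (Y :\: S + S)%VS by rewrite addvC.
  by rewrite addv_diff (addv_idPl SY).
have h1 := dimv_cap_compl Y S. have h2 := dim_add_line xP.
rewrite (capv_idPr SY) -/S in h1 h2.
have := dim_add_le P (Y :\: S). lia.
Qed.

Lemma daddv_pi_zero U V a : (U :&: V = 0)%VS -> a \in V -> daddv_pi U V a = 0%R.
Proof.
move=> dUV aV; have dVU : (V :&: U = 0)%VS by rewrite capvC.
have := daddv_pi_add dUV (memv_add (mem0v U) aV).
rewrite add0r (daddv_pi_id dVU aV) => h.
by apply/(addIr a); rewrite add0r.
Qed.

Section QM.
Variables (E : {vspace vT}) (rho : {vspace vT} -> nat).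
Hypothesis hM : is_qmatroid E rho.

Lemma rk_dim V : (V <= E)%VS -> rho V <= \dim V.
Proof. by case: hM => h _; apply: h. Qed.

Lemma rk_mono V W : (V <= W)%VS -> (W <= E)%VS -> rho V <= rho W.
Proof. by case: hM => _ [h _] VW WE; apply: h => //; apply: subv_trans WE. Qed.

Lemma rk_sub V W : (V <= E)%VS -> (W <= E)%VS ->
  rho (V + W)%VS + rho (V :&: W)%VS <= rho V + rho W.
Proof. by case: hM => _ [_ h]; apply: h. Qed.

Lemma rk0 : rho 0%VS = 0.
Proof. by have := rk_dim (sub0v E); rewrite dimv0; lia. Qed.

Lemma rk_addle V W : (V <= E)%VS -> (W <= E)%VS -> rho (V + W)%VS <= rho V + rho W.
Proof. move=> VE WE; have := rk_sub VE WE; lia. Qed.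

Lemma rk_ui V W : (V <= W)%VS -> (W <= E)%VS -> rho W + \dim V <= rho V + \dim W.
Proof.
move=> VW WE; set C := (W :\: V)%VS.
have CW : (C <= W)%VS by apply: diffvSl.
have CE := subv_trans CW WE; have VE := subv_trans VW WE.
have eW : (C + V = W)%VS by rewrite addv_diff (addv_idPl VW).
have := rk_sub CE VE; rewrite eW capv_diff rk0.
have := rk_dim CE; have := dim_add_disj (capv_diff W V); rewrite -/C eW. lia.
Qed.

Lemma rk_line_le V x : (V <= E)%VS -> x \in E -> rho (V + <[x]>)%VS <= (rho V).+1.
Proof.
move=> VE xE; have xE' : (<[x]> <= E)%VS by rewrite -memvE.
have := rk_ui (addvSl V <[x]>); rewrite subv_add VE xE' => /(_ isT).
have := dim_add_line_le V x; lia.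
Qed.

End QM.
End Gen.
Section Proj.
Variables (F : finFieldType) (vT : vectType F).
Implicit Types (U V W X Y Z A B P Q : {vspace vT}) (x y : vT).
Variables (E1 E2 : {vspace vT}).
Hypothesis d12 : (E1 :&: E2 = 0)%VS.

Let pi1 := daddv_pi E1 E2.
Let pi2 := daddv_pi E2 E1.

Lemma pi1_split a b : a \in E1 -> b \in E2 -> pi1 (a + b)%R = a.
Proof.
move=> aE bE; rewrite /pi1 linearD /= daddv_pi_id //.
by rewrite daddv_pi_zero // addr0.
Qed.

Lemma pi1_img_sub X : (pi1 @: X <= E1)%VS.
Proof. by apply/subvP => v /memv_imgP[u _ ->]; apply: memv_pi. Qed.

Lemma img_split X A B : (A <= E1)%VS -> (B <= E2)%VS -> (X <= A + B)%VS ->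
  (pi1 @: X <= A)%VS.
Proof.
move=> AE BE XAB; apply/subvP => v /memv_imgP[u /(subvP XAB) /memv_addP[a aA [b bB ->]] ->].
by rewrite pi1_split //; [apply: (subvP AE) | apply: (subvP BE)].
Qed.

Lemma img_line_split X A B y : (A <= E1)%VS -> (B <= E2)%VS ->
  (X <= A + B + <[y]>)%VS -> (pi1 @: X <= A + <[pi1 y]>)%VS.
Proof.
move=> AE BE XAB; apply/subvP => v /memv_imgP[u /(subvP XAB) /memv_addP[w /memv_addP[a aA [b bB ->]] [z /vlineP[k ->] ->]] ->].
rewrite linearD /= pi1_split; [|apply: (subvP AE) => // | apply: (subvP BE) => //].
by rewrite linearZ /=; apply: memv_add => //; apply: memvZ; apply: memv_line.
Qed.

Lemma X_le_imgs X : (X <= E1 + E2)%VS -> (X <= pi1 @: X + pi2 @: X)%VS.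
Proof.
move=> XE; apply/subvP => v vX.
rewrite -(daddv_pi_add d12 (subvP XE v vX)).
by apply: memv_add; apply: memv_img.
Qed.

Lemma dim_img_le (f : 'End(vT)) X : \dim (f @: X) <= \dim X.
Proof. have := limg_ker_dim f X; lia. Qed.

End Proj.
From Stdlib Require Import Classical.

Section Gen2.
Variables (F : finFieldType) (vT : vectType F).
Implicit Types (U V W X Y Z A B P Q : {vspace vT}) (x y z : vT).
Variables (E : {vspace vT}) (rho : {vspace vT} -> nat).
Hypothesis hM : is_qmatroid E rho.

Lemma cyc_hyp Y P : qcyclic rho Y -> (P <= Y)%VS -> P != Y ->
  exists W, [/\ (P <= W)%VS, (W <= Y)%VS, (\dim W).+1 <= \dim Y & rho W = rho Y].
Proof.
move=> cY PY PnY; have [x [W [xY PW WY WxY dW]]] := proper_hyp PY PnY.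
exists W; split => //; have [_ h] := cY x xY; exact: h.
Qed.

Lemma cyc_lower Y P : (Y <= E)%VS -> qcyclic rho Y -> (P <= Y)%VS -> P != Y ->
  rho Y + \dim P + 1 <= rho P + \dim Y.
Proof.
move=> YE cY PY PnY; have [W [PW WY dW eW]] := cyc_hyp cY PY PnY.
have := rk_ui hM PW (subv_trans WY YE); lia.
Qed.

Lemma flat_line_bound A P z : (A <= E)%VS -> (P <= E)%VS -> (P <= A + <[z]>)%VS ->
  (forall p, p \in P -> p \notin A -> rho A < rho (A + <[p]>)%VS) ->
  rho A + \dim P <= rho P + \dim A.
Proof.
move=> AE PE PAz hf.
have [PA|] := boolP (P <= A)%VS.
  have := rk_ui hM PA AE; have := dimvS PA; have := rk_mono hM PA AE; lia.
case/subvPn => p pP pA.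
have APE : (A + P <= E)%VS by rewrite subv_add AE PE.
have h1 : rho (A + <[p]>)%VS <= rho (A + P)%VS.
  have sub : (A + <[p]> <= A + P)%VS by apply: addvS => //; rewrite -memvE.
  exact (rk_mono hM sub APE).
have h2 := rk_ui hM (addvSr A P) APE.
have h3 : \dim (A + P) <= \dim (A + <[z]>) by apply: dimvS; rewrite subv_add addvSl PAz.
have h4 := dim_add_line_le A z.
have := hf p pP pA; lia.
Qed.

Lemma cyc_lower2 Y P : (Y <= E)%VS -> qcyclic rho Y -> (P <= Y)%VS ->
  rho Y + \dim P + (P != Y) <= rho P + \dim Y.
Proof.
move=> YE cY PY; have [->|nP] := eqVneq P Y; first by rewrite addn0.
have := cyc_lower YE cY PY nP; lia.
Qed.

Lemma flat_above V : (V <= E)%VS -> exists Fl, [/\ (V <= Fl)%VS, qflat E rho Fl & rho Fl = rho V].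
Proof.
move=> VE; have : \dim E - \dim V <= \dim E - \dim V by [].
move: {2}(\dim E - \dim V) => k; elim: k V VE => [|k IH] V VE hk.
  have eV : V = E.
    by apply/eqP; rewrite eqEdim VE; lia.
  exists V; split => //; split => // x xE; rewrite eV xE.
  done.
case: (classic (qflat E rho V)) => [fV|nfV]; first by exists V.
have [x [xE [xV hx]]] : exists x, [/\ x \in E, x \notin V & rho (V + <[x]>)%VS <= rho V].
  apply: NNPP => hn; apply: nfV; split => // x xE xV.
  case: (leqP (rho (V + <[x]>)%VS) (rho V)) => // hle.
  by exfalso; apply: hn; exists x.
have VxE : (V + <[x]> <= E)%VS by rewrite subv_add VE -memvE.
have := dim_add_line xV; have := dimvS VxE => d1 d2.
have [Fl [VFl fFl eFl]] := IH _ VxE ltac:(lia).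
exists Fl; split => //; first exact: subv_trans (addvSl _ _) VFl.
by rewrite eFl; apply/eqP; rewrite eqn_leq hx; exact (rk_mono hM (addvSl _ _) VxE).
Qed.

Lemma cf_below Fl : qflat E rho Fl -> exists Z,
  [/\ cyclic_flat E rho Z, (Z <= Fl)%VS & rho Z + \dim Fl <= rho Fl + \dim Z].
Proof.
have : \dim Fl <= \dim Fl by [].
move: {2}(\dim Fl) => k; elim: k Fl => [|k IH] Fl hk fFl.
  have F0 : Fl = 0%VS by apply/eqP; rewrite -dimv_eq0; lia.
  exists Fl; split => //; first split => //.
  rewrite F0 => x; rewrite memv0 => /eqP ->; split; first exact: mem0v.
  by move=> W; rewrite subv0 => /eqP ->.
case: (classic (qcyclic rho Fl)) => [cF|ncF]; first by exists Fl; split.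
have FlE : (Fl <= E)%VS by case: fFl.
have [x [W [xF WF WxF hW]]] : exists x W, [/\ x \in Fl, (W <= Fl)%VS, (W + <[x]> = Fl)%VS &
    rho W <> rho Fl].
  apply: NNPP => hn; apply: ncF => x xF; split => // W WF WxF.
  by apply: NNPP => hne; apply: hn; exists x, W.
have xW : x \notin W.
  apply/negP => xW'; apply: hW.
  have e : (W + <[x]> = W)%VS by apply/addv_idPl; rewrite -memvE.
  by rewrite -WxF e.
have dF : \dim Fl = (\dim W).+1 by rewrite -WxF dim_add_line.
have WE := subv_trans WF FlE.
have rW1 : rho W < rho Fl.
  by have := rk_mono hM WF FlE; lia.
have rW2 : rho Fl <= (rho W).+1.
  rewrite -WxF; exact (rk_line_le hM WE (subvP FlE x xF)).
have fW : qflat E rho W.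
  split => // y yE yW.
  have [yF|yF] := boolP (y \in Fl).
    have eWy : (W + <[y]> = Fl)%VS.
      apply/eqP; rewrite eqEdim subv_add WF -memvE yF /= dF dim_add_line //.
    by rewrite eWy.
  have WyE : (W + <[y]> <= E)%VS by rewrite subv_add WE -memvE.
  have := rk_sub hM WyE FlE.
  have -> : (W + <[y]> + Fl = Fl + <[y]>)%VS by rewrite addvC addvA (addv_idPl WF).
  have : rho W <= rho ((W + <[y]>) :&: Fl)%VS.
    have s : (W <= (W + <[y]>) :&: Fl)%VS by rewrite subv_cap addvSl WF.
    exact (rk_mono hM s (subv_trans (capvSr _ _) FlE)).
  case: fFl => _ /(_ y yE yF).
  lia.
have [Z [cZ ZW hZ]] := IH W ltac:(lia) fW.
exists Z; split => //; first exact: subv_trans ZW WF.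
lia.
Qed.

Lemma rank_cf V : (V <= E)%VS -> exists Z,
  cyclic_flat E rho Z /\ rho Z + \dim (V + Z) <= rho V + \dim Z.
Proof.
move=> VE; have [Fl [VFl fFl eFl]] := flat_above VE.
have [Z [cZ ZFl hZ]] := cf_below fFl.
exists Z; split => //.
have : \dim (V + Z) <= \dim Fl by apply: dimvS; rewrite subv_add VFl ZFl.
lia.
Qed.

End Gen2.
Section DirB.
Variables (F : finFieldType) (vT : vectType F).
Implicit Types (U V W X Y Z A B P Q : {vspace vT}) (x y z : vT).
Variables (E : {vspace vT}) (rho : {vspace vT} -> nat).
Hypothesis hM : is_qmatroid E rho.

Lemma qm_restr E1 : (E1 <= E)%VS -> is_qmatroid E1 rho.
Proof.
move=> E1E; split; [|split].
- by move=> V VE1; exact (rk_dim hM (subv_trans VE1 E1E)).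
- by move=> V W _ WE1 VW; exact (rk_mono hM VW (subv_trans WE1 E1E)).
- by move=> V W VE1 WE1; exact (rk_sub hM (subv_trans VE1 E1E) (subv_trans WE1 E1E)).
Qed.

Lemma ds_le E1 E2 V X : (E1 + E2 = E)%VS -> (E1 :&: E2 = 0)%VS ->
  (V <= E)%VS -> (X <= V)%VS ->
  rho V + \dim X <= \dim V + rho (daddv_pi E1 E2 @: X)%VS + rho (daddv_pi E2 E1 @: X)%VS.
Proof.
move=> hE d VE XV.
have h1 := rk_ui hM XV VE.
have XE : (X <= E1 + E2)%VS by rewrite hE; exact: subv_trans XV VE.
have s := X_le_imgs d XE.
have E1E : (E1 <= E)%VS by rewrite -hE addvSl.
have E2E : (E2 <= E)%VS by rewrite -hE addvSr.
have P1E := subv_trans (pi1_img_sub E1 E2 X) E1E.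
have P2E := subv_trans (pi1_img_sub E2 E1 X) E2E.
have SE : ((daddv_pi E1 E2 @: X) + (daddv_pi E2 E1 @: X) <= E)%VS by rewrite subv_add P1E P2E.
have h2 := rk_mono hM s SE.
have h3 := rk_addle hM P1E P2E.
lia.
Qed.

Lemma ds_of E1 E2 : (E1 + E2 = E)%VS -> (E1 :&: E2 = 0)%VS ->
  E1 != 0%VS -> E2 != 0%VS ->
  (forall V, (V <= E)%VS -> exists X, (X <= V)%VS /\
     \dim V + rho (daddv_pi E1 E2 @: X)%VS + rho (daddv_pi E2 E1 @: X)%VS <= rho V + \dim X) ->
  qreducible E rho.
Proof.
move=> hE d n1 n2 hex.
have E1E : (E1 <= E)%VS by rewrite -hE addvSl.
have E2E : (E2 <= E)%VS by rewrite -hE addvSr.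
exists E1, E2, rho, rho; do 4 (split; first by [|apply: qm_restr]).
split; first done; split; first done.
cbv zeta; move=> V VE; split.
  have [X [XV hX]] := hex V VE; exists X => //.
  have := ds_le hE d VE XV; lia.
move=> X XV; have := ds_le hE d VE XV; lia.
Qed.

Lemma dim_ge2_hyp W x : (2 <= \dim E)%N -> (W + <[x]> = E)%VS -> W != 0%VS.
Proof.
move=> h2 hW; apply/negP => /eqP W0; move: hW; rewrite W0 add0v => eE.
have := leq_b1 (x != 0%R); rewrite -dim_vline eE; lia.
Qed.

Lemma red_loop x : (2 <= \dim E)%N -> x \in E -> x != 0%R -> rho <[x]>%VS = 0 ->
  qreducible E rho.
Proof.
move=> h2 xE x0 rx.
have xE' : (<[x]> <= E)%VS by rewrite -memvE.
set H := (E :\: <[x]>)%VS.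
have hE : (H + <[x]> = E)%VS by rewrite addv_diff (addv_idPl xE').
have d : (H :&: <[x]> = 0)%VS by apply: capv_diff.
have HE : (H <= E)%VS by apply: diffvSl.
apply: (ds_of hE d).
- exact: dim_ge2_hyp h2 hE.
- by rewrite -dimv_eq0 dim_vline x0.
move=> V VE; exists V; split => //.
set p1 := daddv_pi H <[x]>; set p2 := daddv_pi <[x]> H.
have P2 : (p2 @: V <= <[x]>)%VS by apply: pi1_img_sub.
have r2 : rho (p2 @: V)%VS = 0.
  by have := rk_mono hM P2 xE'; rewrite rx; lia.
have VxE : (V + <[x]> <= E)%VS by rewrite subv_add VE xE'.
have P1 : (p1 @: V <= V + <[x]>)%VS.
  apply/subvP => w /memv_imgP[v vV ->].
  have vE : v \in (H + <[x]>)%VS by rewrite hE; apply: (subvP VE).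
  have e := daddv_pi_add d vE.
  have -> : p1 v = (v - daddv_pi <[x]> H v)%R by rewrite -{2}e addrK.
  by apply: memv_add => //; rewrite memvN; apply: memv_pi.
have r1 := rk_mono hM P1 VxE.
have r3 := rk_addle hM VE xE'.
lia.
Qed.

Lemma red_coloop x W : (2 <= \dim E)%N -> x \in E -> (W <= E)%VS ->
  (W + <[x]> = E)%VS -> rho W <> rho E -> qreducible E rho.
Proof.
move=> h2 xE WE hW rW.
have xW : x \notin W.
  apply/negP => xW; apply: rW.
  have e : (W + <[x]> = W)%VS by apply/addv_idPl; rewrite -memvE.
  by rewrite -hW e.
have d := line_disj xW.
have dE : \dim E = (\dim W).+1 by rewrite -hW dim_add_line.
have rlt : rho W < rho E by have := rk_mono hM WE (subvv E); lia.
apply: (ds_of hW d).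
- exact: dim_ge2_hyp h2 hW.
- have x0 : x != 0%R by apply: contraNneq xW => ->; rewrite mem0v.
  by rewrite -dimv_eq0 dim_vline x0.
move=> V VE; exists (V :&: W)%VS; split; first exact: capvSl.
set X := (V :&: W)%VS.
have XW : (X <= W)%VS by apply: capvSr.
have XE := subv_trans XW WE.
have P1 : (daddv_pi W <[x]> @: X <= X)%VS.
  by apply: (img_split d XW (sub0v _)); rewrite addv0.
have d' : (<[x]> :&: W = 0)%VS by rewrite capvC.
have P2 : (daddv_pi <[x]> W @: X <= 0)%VS.
  by apply: (img_split d' (sub0v _) XW); rewrite add0v.
have r1 := rk_mono hM P1 XE.
have r2 := rk_mono hM P2 (sub0v E).
rewrite (rk0 hM) in r2.
have [VW|VW] := boolP (V <= W)%VS.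
  have eX : X = V by apply/capv_idPl.
  rewrite eX in r1 r2 *; lia.
have eVW : (V + W = E)%VS.
  apply/eqP; rewrite eqEdim subv_add VE WE /= dE.
  have : \dim W < \dim (V + W).
    rewrite ltn_neqAle dimvS ?addvSr // andbT.
    apply/negP => /eqP eq; apply: (negP VW).
    have : (V + W == W)%VS by rewrite eq_sym eqEdim addvSr eq leqnn.
    by move/eqP <-; apply: addvSl.
  lia.
have hs := rk_sub hM VE WE; rewrite eVW -/X in hs.
have hd := dimv_sum_cap V W; rewrite eVW -/X in hd.
lia.
Qed.

Lemma rk_additive Z1 Z2 A B : (Z1 + Z2 = E)%VS -> (Z1 :&: Z2 = 0)%VS ->
  rho Z1 + rho Z2 = rho E -> (A <= Z1)%VS -> (B <= Z2)%VS ->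
  rho A + rho B <= rho (A + B)%VS.
Proof.
move=> hE d hr AZ BZ.
have Z1E : (Z1 <= E)%VS by rewrite -hE addvSl.
have Z2E : (Z2 <= E)%VS by rewrite -hE addvSr.
have AE := subv_trans AZ Z1E; have BE := subv_trans BZ Z2E.
have AZ2E : (A + Z2 <= E)%VS by rewrite subv_add AE Z2E.
have s1 := rk_sub hM AZ2E Z1E.
have e1 : (A + Z2 + Z1 = E)%VS by rewrite addvC addvA (addv_idPl AZ) hE.
have e2 : ((A + Z2) :&: Z1 = A)%VS by rewrite modular // capvC d addv0.
rewrite e1 e2 in s1.
have ABE : (A + B <= E)%VS by rewrite subv_add AE BE.
have s2 := rk_sub hM ABE Z2E.
have e3 : (A + B + Z2 = A + Z2)%VS by rewrite -addvA (addv_idPr BZ).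
have e4 : ((A + B) :&: Z2 = B)%VS.
  rewrite addvC modular //.
  have : (A :&: Z2 <= Z1 :&: Z2)%VS by apply: capvS.
  by rewrite d subv0 => /eqP ->; rewrite addv0.
rewrite e3 e4 in s2.
lia.
Qed.

Lemma red_decomp Z1 Z2 : Z1 != 0%VS -> Z2 != 0%VS ->
  (Z1 + Z2 = E)%VS -> (Z1 :&: Z2 = 0)%VS -> rho Z1 + rho Z2 = rho E ->
  (forall Z, cyclic_flat E rho Z -> exists Y1 Y2,
        [/\ cyclic_flat E rho Y1, (Y1 <= Z1)%VS, cyclic_flat E rho Y2, (Y2 <= Z2)%VS &
            Z = (Y1 + Y2)%VS]) ->
  qreducible E rho.
Proof.
move=> n1 n2 hE d hr hZ.
apply: (ds_of hE d n1 n2) => V VE.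
have [Z [cZ hVZ]] := rank_cf hM VE.
have [Y1 [Y2 [_ Y1Z _ Y2Z eZ]]] := hZ Z cZ.
exists (V :&: Z)%VS; split; first exact: capvSl.
set X := (V :&: Z)%VS.
have XZ : (X <= Y1 + Y2)%VS by rewrite -eZ capvSr.
have Z1E : (Z1 <= E)%VS by rewrite -hE addvSl.
have Z2E : (Z2 <= E)%VS by rewrite -hE addvSr.
have P1 : (daddv_pi Z1 Z2 @: X <= Y1)%VS by apply: (img_split d Y1Z Y2Z XZ).
have d' : (Z2 :&: Z1 = 0)%VS by rewrite capvC.
have P2 : (daddv_pi Z2 Z1 @: X <= Y2)%VS by apply: (img_split d' Y2Z Y1Z); rewrite addvC.
have r1 := rk_mono hM P1 (subv_trans Y1Z Z1E).
have r2 := rk_mono hM P2 (subv_trans Y2Z Z2E).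
have r3 := rk_additive hE d hr Y1Z Y2Z.
rewrite -eZ in r3.
have hd := dimv_sum_cap V Z; rewrite -/X in hd.
lia.
Qed.

End DirB.
Ltac clean := repeat match goal with
  | H : is_true (subsetv _ _) |- _ => clear H
  | H : is_true (negb (in_mem _ _)) |- _ => clear H
  | H : is_true (in_mem _ _) |- _ => clear H
  | H : forall _, _ |- _ => clear H
  | H : ex _ |- _ => clear H
  | H : is_qmatroid _ _ |- _ => clear H
  | H : qcyclic _ _ |- _ => clear H
  | H : @eq {vspace _} _ _ |- _ => clear H
  end.

Section DirA.
Variables (F : finFieldType) (vT : vectType F).
Implicit Types (U V W X Y Z A B P Q : {vspace vT}) (x y z : vT).
Variables (E : {vspace vT}) (rho : {vspace vT} -> nat).
Hypothesis hM : is_qmatroid E rho.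
Variables (E1 E2 : {vspace vT}).
Hypothesis d12 : (E1 :&: E2 = 0)%VS.
Hypothesis hE : (E1 + E2 = E)%VS.
Hypothesis hadd : forall A B, (A <= E1)%VS -> (B <= E2)%VS -> rho (A + B)%VS = rho A + rho B.
Hypothesis hex : forall V, (V <= E)%VS -> exists X, (X <= V)%VS /\
  rho V + \dim X = \dim V + rho (daddv_pi E1 E2 @: X)%VS + rho (daddv_pi E2 E1 @: X)%VS.
Hypothesis noloop : forall z, z \in E -> z != 0%R -> 0 < rho <[z]>%VS.

Let d21 : (E2 :&: E1 = 0)%VS. Proof. by rewrite capvC. Qed.
Let E1E : (E1 <= E)%VS. Proof. by rewrite -hE addvSl. Qed.
Let E2E : (E2 <= E)%VS. Proof. by rewrite -hE addvSr. Qed.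

Lemma flat_sum A B : (A <= E1)%VS -> (B <= E2)%VS ->
  (forall z, z \in E1 -> z \notin A -> rho A < rho (A + <[z]>)%VS) ->
  (forall z, z \in E2 -> z \notin B -> rho B < rho (B + <[z]>)%VS) ->
  qflat E rho (A + B).
Proof.
move=> AE1 BE2 hA hB.
have AE := subv_trans AE1 E1E; have BE := subv_trans BE2 E2E.
have ABE : (A + B <= E)%VS by rewrite subv_add AE BE.
split => // y yE yAB.
have VE : (A + B + <[y]> <= E)%VS by rewrite subv_add ABE -memvE.
have [X [XV eX]] := hex VE.
have P1 := img_line_split d12 AE1 BE2 XV.
have XV' : (X <= B + A + <[y]>)%VS by rewrite (addvC B A).
have P2 := img_line_split d21 BE2 AE1 XV'.
have PE1 : (daddv_pi E1 E2 @: X <= E1)%VS by apply: pi1_img_sub.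
have QE2 : (daddv_pi E2 E1 @: X <= E2)%VS by apply: pi1_img_sub.
have bP : rho A + \dim (daddv_pi E1 E2 @: X) <= rho (daddv_pi E1 E2 @: X)%VS + \dim A.
  apply: (flat_line_bound hM AE (subv_trans PE1 E1E) P1) => p pP pA.
  by apply: hA => //; apply: (subvP PE1).
have bQ : rho B + \dim (daddv_pi E2 E1 @: X) <= rho (daddv_pi E2 E1 @: X)%VS + \dim B.
  apply: (flat_line_bound hM BE (subv_trans QE2 E2E) P2) => p pP pA.
  by apply: hB => //; apply: (subvP QE2).
have XE : (X <= E1 + E2)%VS by rewrite hE; apply: subv_trans XV VE.
have dX : \dim X <= \dim (daddv_pi E1 E2 @: X) + \dim (daddv_pi E2 E1 @: X).
  exact: leq_trans (dimvS (X_le_imgs d12 XE)) (dim_add_le _ _).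
have dAB : (A :&: B = 0)%VS.
  by apply/eqP; rewrite -subv0 -d12; apply: capvS.
have dV : \dim (A + B + <[y]>) = (\dim A + \dim B).+1 by rewrite dim_add_line // dim_add_disj.
have hAB := hadd AE1 BE2.
move: eX bP bQ dX dV hAB.
move: (rho (A + B + <[y]>)%VS) (rho (A + B)%VS) (rho A) (rho B) (\dim A) (\dim B) (\dim X)
  (\dim (A + B + <[y]>)) (rho (daddv_pi E1 E2 @: X)%VS) (rho (daddv_pi E2 E1 @: X)%VS)
  (\dim (daddv_pi E1 E2 @: X)) (\dim (daddv_pi E2 E1 @: X)).
clear. move=> *. lia.
Qed.

Lemma cyc_split A B : (A <= E1)%VS -> (B <= E2)%VS -> qcyclic rho (A + B) -> qcyclic rho A.
Proof.
move=> AE1 BE2 cAB x xA; split => // W WA WxA.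
have xAB : x \in (A + B)%VS by apply: (subvP (addvSl A B)).
have [_ h] := cAB x xAB.
have WB : (W + B <= A + B)%VS by apply: addvS.
have e : (W + B + <[x]> = A + B)%VS by rewrite -addvA (addvC B) addvA WxA.
have := h _ WB e.
rewrite !hadd //; first lia.
exact: subv_trans WA AE1.
Qed.

Lemma cyc_sum Y1 Y2 : (Y1 <= E1)%VS -> (Y2 <= E2)%VS -> qcyclic rho Y1 -> qcyclic rho Y2 ->
  qcyclic rho (Y1 + Y2).
Proof.
move=> Y1E1 Y2E2 c1 c2 x xY; split => // W WY WxY.
have Y1E := subv_trans Y1E1 E1E; have Y2E := subv_trans Y2E2 E2E.
have YE : (Y1 + Y2 <= E)%VS by rewrite subv_add Y1E Y2E.
have WE := subv_trans WY YE.
have m := rk_mono hM WY YE.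
have [X [XW eX]] := hex WE.
have XY := subv_trans XW WY.
have P1 := img_split d12 Y1E1 Y2E2 XY.
have XY' : (X <= Y2 + Y1)%VS by rewrite addvC.
have P2 := img_split d21 Y2E2 Y1E1 XY'.
have XE : (X <= E1 + E2)%VS by rewrite hE; apply: subv_trans XW WE.
have dX : \dim X <= \dim (daddv_pi E1 E2 @: X) + \dim (daddv_pi E2 E1 @: X).
  exact: leq_trans (dimvS (X_le_imgs d12 XE)) (dim_add_le _ _).
have dXW := dimvS XW.
have dWY : \dim (Y1 + Y2) <= (\dim W).+1 by rewrite -WxY; apply: dim_add_line_le.
have dWY' := dimvS WY.
have dY : (Y1 :&: Y2 = 0)%VS.
  by apply/eqP; rewrite -subv0 -d12; apply: capvS.
have dYs := dim_add_disj dY.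
have hY := hadd Y1E1 Y2E2.
have b1 := cyc_lower2 hM Y1E c1 P1.
have b2 := cyc_lower2 hM Y2E c2 P2.
move: (daddv_pi E1 E2 @: X)%VS (daddv_pi E2 E1 @: X)%VS eX dX b1 b2 => P Q eX dX b1 b2.
have dPY := dimvS P1; have dQY := dimvS P2.
case: (eqVneq P Y1) => [eP|nP]; case: (eqVneq Q Y2) => [eQ|nQ]; subst;
  rewrite ?eqxx ?nP ?nQ /= in b1 b2; clean; lia.
Qed.

Lemma cf_part A B : (A <= E1)%VS -> (B <= E2)%VS -> cyclic_flat E rho (A + B) ->
  cyclic_flat E rho A.
Proof.
move=> AE1 BE2 [fAB cAB]; split; last exact: cyc_split cAB.
rewrite -[A]addv0; apply: flat_sum => //; first exact: sub0v.
  move=> z zE1 zA.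
  have zAB : z \notin (A + B)%VS.
    apply: contra zA => /memv_addP[a aA [b bB ez]].
    have : daddv_pi E1 E2 z = z by apply: daddv_pi_id.
    rewrite ez pi1_split //; [|exact: (subvP AE1)|exact: (subvP BE2)].
    by move=> <-.
  case: fAB => _ /(_ z (subvP E1E z zE1) zAB).
  have -> : (A + B + <[z]> = (A + <[z]>) + B)%VS by rewrite -addvA (addvC B) addvA.
  have AzE1 : (A + <[z]> <= E1)%VS by rewrite subv_add AE1 -memvE.
  rewrite (hadd AzE1 BE2) (hadd AE1 BE2); lia.
move=> z zE2; rewrite memv0 add0v (rk0 hM) => z0.
exact: noloop (subvP E2E z zE2) z0.
Qed.

Lemma cf_split Z : cyclic_flat E rho Z -> Z = ((Z :&: E1) + (Z :&: E2))%VS.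
Proof.
move=> [fZ cZ]; have ZE : (Z <= E)%VS by case: fZ.
have [X [XZ eX]] := hex ZE.
have eXZ : X = Z.
  apply/eqP; apply: contraT => nX.
  have [W [XW WZ dW rW]] := cyc_hyp cZ XZ nX.
  have := ds_le hM hE d12 (subv_trans WZ ZE) XW.
  clean; lia.
rewrite eXZ in eX.
have ZE12 : (Z <= E1 + E2)%VS by rewrite hE.
have ZS := X_le_imgs d12 ZE12.
have PE1 := pi1_img_sub E1 E2 Z.
have QE2 := pi1_img_sub E2 E1 Z.
move: (daddv_pi E1 E2 @: Z)%VS (daddv_pi E2 E1 @: Z)%VS eX ZS PE1 QE2 => P Q eX ZS PE1 QE2.
have rS := hadd PE1 QE2.
have SE : (P + Q <= E)%VS by rewrite subv_add (subv_trans PE1 E1E) (subv_trans QE2 E2E).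
have SZ : (P + Q <= Z)%VS.
  apply/subvP => s sS; apply/negPn/negP => sZ.
  case: fZ => _ /(_ s (subvP SE s sS) sZ).
  have ZsS : (Z + <[s]> <= P + Q)%VS by rewrite subv_add ZS -memvE.
  have := rk_mono hM ZsS SE.
  clean; lia.
apply/eqP; rewrite eqEsubv; apply/andP; split.
  apply: subv_trans ZS _; apply: addvS; rewrite subv_cap ?PE1 ?QE2 andbT.
    exact: subv_trans (addvSl P Q) SZ.
  exact: subv_trans (addvSr P Q) SZ.
by rewrite subv_add !capvSl.
Qed.

End DirA.
Section Final.
Variables (F : finFieldType) (vT : vectType F).
Implicit Types (U V W X Y Z A B P Q : {vspace vT}) (x y z : vT).

Lemma img_sum_l E1 E2 A B : (E1 :&: E2 = 0)%VS -> (A <= E1)%VS -> (B <= E2)%VS ->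
  (daddv_pi E1 E2 @: (A + B) = A)%VS.
Proof.
move=> d AE1 BE2; apply/eqP; rewrite eqEsubv (img_split d AE1 BE2 (subvv _)) /=.
apply/subvP => a aA; apply/memv_imgP; exists a; first exact: (subvP (addvSl A B)).
by rewrite daddv_pi_id // (subvP AE1).
Qed.

Lemma dirA (E : {vspace vT}) (rho : {vspace vT} -> nat) (hM : is_qmatroid E rho)
  E1 E2 r1 r2 : is_qmatroid E1 r1 -> is_qmatroid E2 r2 ->
  is_direct_sum E rho E1 r1 E2 r2 -> qfull E rho ->
  [/\ (E1 + E2 = E)%VS, (E1 :&: E2 = 0)%VS,
   (forall A B, (A <= E1)%VS -> (B <= E2)%VS -> rho (A + B)%VS = rho A + rho B),
   (forall V, (V <= E)%VS -> exists X, (X <= V)%VS /\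
      rho V + \dim X = \dim V + rho (daddv_pi E1 E2 @: X)%VS + rho (daddv_pi E2 E1 @: X)%VS) &
   (forall z, z \in E -> z != 0%R -> 0 < rho <[z]>%VS)].
Proof.
move=> m1 m2 [hE [d hds]] [cl0 cE]; cbv zeta in hds.
have d21 : (E2 :&: E1 = 0)%VS by rewrite capvC.
have E1E : (E1 <= E)%VS by rewrite -hE addvSl.
have E2E : (E2 <= E)%VS by rewrite -hE addvSr.
have A1 : forall A B, (A <= E1)%VS -> (B <= E2)%VS -> rho (A + B)%VS = r1 A + r2 B.
  move=> A B AE1 BE2.
  have ABE : (A + B <= E)%VS by rewrite subv_add (subv_trans AE1 E1E) (subv_trans BE2 E2E).
  have [[X [XV eX]] hle] := hds _ ABE.
  have := hle _ (subvv _).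
  rewrite (img_sum_l d AE1 BE2) addvC (img_sum_l d21 BE2 AE1) addvC => le1.
  have P1 := img_split d AE1 BE2 XV.
  have XV' : (X <= B + A)%VS by rewrite addvC.
  have P2 := img_split d21 BE2 AE1 XV'.
  have u1 := rk_ui m1 P1 AE1.
  have u2 := rk_ui m2 P2 BE2.
  have XE : (X <= E1 + E2)%VS by rewrite hE; apply: subv_trans XV ABE.
  have dX : \dim X <= \dim (daddv_pi E1 E2 @: X) + \dim (daddv_pi E2 E1 @: X).
    exact: leq_trans (dimvS (X_le_imgs d XE)) (dim_add_le _ _).
  have dAB : (A :&: B = 0)%VS by apply/eqP; rewrite -subv0 -d; apply: capvS.
  have dd := dim_add_disj dAB.
  clean. lia.
have rE1 : forall A, (A <= E1)%VS -> rho A = r1 A.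
  by move=> A AE1; have := A1 A 0%VS AE1 (sub0v _); rewrite addv0 (rk0 m2) addn0.
have rE2 : forall B, (B <= E2)%VS -> rho B = r2 B.
  by move=> B BE2; have := A1 0%VS B (sub0v _) BE2; rewrite add0v (rk0 m1).
split => //.
- by move=> A B AE1 BE2; rewrite A1 // rE1 // rE2.
- move=> V VE; have [[X [XV eX]] _] := hds _ VE; exists X; split => //.
  rewrite (rE1 _ (pi1_img_sub _ _ _)) (rE2 _ (pi1_img_sub _ _ _)).
  clean; lia.
- move=> z zE z0; rewrite lt0n; apply/negP => /eqP r0.
  have : (<[z]> <= qcl E rho 0%VS)%VS.
    apply: (sumv_sup (z : finvect_type vT)) => //.
    by rewrite add0v r0 (rk0 hM) zE eqxx.
  by rewrite cl0 subv0 -dimv_eq0 dim_vline z0.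
Qed.

End Final.

Unset Implicit Arguments.
Set Strict Implicit.

Theorem theorem7p13 (F : finFieldType) (vT : vectType F)
    (E : {vspace vT}) (rho : {vspace vT} -> nat)
    (hM : is_qmatroid E rho) (hdim : (2 <= \dim E)%N) :
  qirreducible E rho <->
  (qfull E rho /\
   ~ (exists Z1 Z2 : {vspace vT},
        Z1 != 0%VS /\ Z2 != 0%VS /\
        cyclic_flat E rho Z1 /\ cyclic_flat E rho Z2 /\
        (Z1 + Z2)%VS = E /\ (Z1 :&: Z2)%VS = 0%VS /\
        (rho Z1 + rho Z2 = rho E)%N /\
        (forall Z : {vspace vT},
           cyclic_flat E rho Z <->
           exists Y1 Y2 : {vspace vT},
             [/\ cyclic_flat E rho Y1, (Y1 <= Z1)%VS,
                 cyclic_flat E rho Y2, (Y2 <= Z2)%VS &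
                 Z = (Y1 + Y2)%VS]))).
Proof.
split.
- move=> irr; split; first split.
  + apply/eqP; rewrite -subv0; apply/subv_sumP => i /andP[iE /eqP ri].
    case: (eqVneq (i : vT) 0%R) => [->|i0]; first exact: subvv.
    exfalso; apply: irr; apply: (red_loop hM hdim iE i0).
    by move: ri; rewrite add0v (rk0 hM).
  + move=> x xE; split => // W WE WxE; apply: NNPP => ne; apply: irr.
    exact: (red_coloop hM hdim xE WE WxE ne).
  + move=> [Z1 [Z2 [n1 [n2 [c1 [c2 [hE [d [hr hZ]]]]]]]]]; apply: irr.
    apply: (red_decomp hM n1 n2 hE d hr) => Z cZ; exact: (hZ Z).1 cZ.
- move=> [full nodec] [E1 [E2 [r1 [r2 [n1 [n2 [m1 [m2 hds]]]]]]]].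
  have [hE d hadd hex noloop] := dirA hM m1 m2 hds full.
  have d21 : (E2 :&: E1 = 0)%VS by rewrite capvC.
  have hE' : (E2 + E1 = E)%VS by rewrite addvC.
  have hadd' : forall A B, (A <= E2)%VS -> (B <= E1)%VS -> rho (A + B)%VS = rho A + rho B.
    by move=> A B AE BE; rewrite addvC hadd // addnC.
  have hex' : forall V, (V <= E)%VS -> exists X, (X <= V)%VS /\
      rho V + \dim X = \dim V + rho (daddv_pi E2 E1 @: X)%VS + rho (daddv_pi E1 E2 @: X)%VS.
    move=> V VE; have [X [XV eX]] := hex V VE; exists X; split => //; rewrite eX; lia.
  have cEE : cyclic_flat E rho E.
    split; last by case: full.
    by split; [exact: subvv | move=> x ->].
  apply: nodec; exists E1, E2; do 2 (split => //).
  split; first by apply: (cf_part hM d hE hadd hex noloop (subvv E1) (subvv E2)); rewrite hE.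
  split; first by apply: (cf_part hM d21 hE' hadd' hex' noloop (subvv E2) (subvv E1)); rewrite hE'.
  do 2 (split => //).
  split; first by have := hadd _ _ (subvv E1) (subvv E2); rewrite hE => ->.
  move=> Z; split.
  + move=> cZ; have eZ := cf_split hM d hE hadd hex cZ.
    exists (Z :&: E1)%VS, (Z :&: E2)%VS; split => //; try exact: capvSr.
    * by apply: (cf_part hM d hE hadd hex noloop (capvSr Z E1) (capvSr Z E2)); rewrite -eZ.
    * by apply: (cf_part hM d21 hE' hadd' hex' noloop (capvSr Z E2) (capvSr Z E1)); rewrite addvC -eZ.
  + move=> [Y1 [Y2 [[fY1 cY1] Y1E1 [fY2 cY2] Y2E2 ->]]]; split.
    * apply: (flat_sum hM d hE hadd hex Y1E1 Y2E2).
        move=> z zE1 zY; case: fY1 => _; apply => //.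
        by apply: (subvP _ z zE1); rewrite -hE addvSl.
      move=> z zE2 zY; case: fY2 => _; apply => //.
      by apply: (subvP _ z zE2); rewrite -hE addvSr.
    * exact: (cyc_sum hM d hE hadd hex noloop Y1E1 Y2E2 cY1 cY2).
Qed.
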